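(* Let $\odot$ be a non-degenerate pseudo-multiplication and let $\tau$ be a $\sigma$-maxitive measure on a $\sigma$-algebra $\mathcal{B}$ on a nonempty set $E$ having the Radon–Nikodym property with respect to the idempotent $\odot$-integral. Then $\tau$ is localizable.
   Context: Write $\overline{\mathbb{R}}_+=[0,\infty]$. A pseudo-multiplication is a binary operation $\odot$ on $\overline{\mathbb{R}}_+$ with the following properties: - it is associative; - it is continuous on $(0,\infty)\times[0,\infty]$; - for every $t$, the map $s\mapsto s\odot t$ is continuous on $(0,\infty]$; - it is nondecreasing in each argument; - it has a left identity $1_\odot$, i.e. $1_\odot\odot t=t$ for all $t$; - it has no zero divisors, i.e. $s\odot t=0$ implies $s=0$ or $t=0$; - $0\odot t=t\odot 0=0$ for all $t$. Put $O(t)=\inf_{s>0}s\odot t$. An element $t$ is $\odot$-finite if $O(t)=0$, and $\odot$-infinite otherwise. The operation $\odot$ is non-degenerate if $1_\odot$ is $\odot$-finite. A $\sigma$-maxitive measure on $\mathcal{B}$ is a map $\nu:\mathcal{B}\to\overline{\mathbb{R}}_+$ with $\nu(\emptyset)=0$ and $\nu(\bigcup_j B_j)=\sup_j\nu(B_j)$ for every countable family. A set is $\tau$-negligible if it is contained in some $B\in\mathcal{B}$ with $\tau(B)=0$. A $\sigma$-ideal of $\mathcal{B}$ is a nonempty subfamily closed under countable unions and under passing to measurable subsets. A map $f:E\to\overline{\mathbb{R}}_+$ is $\mathcal{B}$-measurable if $\{f>t\}\in\mathcal{B}$ for all $t\in[0,\infty)$. The idempotent $\odot$-integral is $\int^\infty_B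 f\odot d\tau=\sup_{t\in[0,\infty)}t\odot\tau(B\cap\{f>t\})$. $\nu\ll_\odot\tau$ means $\nu(B)\le\infty\odot\tau(B)$ for every $B\in\mathcal{B}$ with $\tau(B)$ $\odot$-finite. $\tau$ has the Radon–Nikodym property if every $\sigma$-maxitive $\nu\ll_\odot\tau$ admits a $\mathcal{B}$-measurable $c:E\to\overline{\mathbb{R}}_+$ with $\nu(B)=\int^\infty_B c\odot d\tau$ for all $B\in\mathcal{B}$. $\tau$ is localizable if for every $\sigma$-ideal $\mathcal{I}$ of $\mathcal{B}$ there is $L\in\mathcal{B}$ such that: - $S\setminus L$ is $\tau$-negligible for all $S\in\mathcal{I}$; - whenever $B\in\mathcal{B}$ satisfies that $S\setminus B$ is $\tau$-negligible for all $S\in\mathcal{I}$, the set $L\setminus B$ is $\tau$-negligible. *)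

(* Defs.v *)
From Stdlib Require Import Reals.
Open Scope R_scope.

(* The extended half-line [0, +oo]: Some r (with 0 <= r) is the real r, None is +oo. *)
Definition nonneg_opt (x : option R) : Prop :=
  match x with Some r => 0 <= r | None => True end.
Definition ER : Type := { x : option R | nonneg_opt x }.
Definition erval (x : ER) : option R := proj1_sig x.

Definition ER0 : ER := exist nonneg_opt (Some 0) (Rle_refl 0).
Definition ERinf : ER := exist nonneg_opt None I.

Definition ERle (x y : ER) : Prop :=
  match erval x, erval y with
  | _, None => True
  | None, Some _ => False
  | Some a, Some b => a <= b
  end.
Definition ERlt (x y : ER) : Prop := ERle x y /\ x <> y.

Definition is_sup (S : ER -> Prop) (s : ER) : Prop :=
  (forall u, S u -> ERle u s) /\ (forall b, (forall u, S u -> ERle u b) -> ERle s b).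
Definition is_inf (S : ER -> Prop) (s : ER) : Prop :=
  (forall u, S u -> ERle s u) /\ (forall b, (forall u, S u -> ERle b u) -> ERle b s).

(* Basic neighbourhoods for the order topology of [0, +oo]:
   for finite a: {y finite : |y - a| < e}; for a = +oo: {y : y > 1/e}. *)
Definition ball (a : ER) (e : R) (y : ER) : Prop :=
  match erval a, erval y with
  | Some a', Some y' => Rabs (y' - a') < e
  | Some _, None => False
  | None, Some y' => / e < y'
  | None, None => True
  end.

Record pseudo_mult (op : ER -> ER -> ER) (one : ER) : Prop := {
  pm_assoc : forall a b c, op (op a b) c = op a (op b c);
  (* continuity on (0,oo) x [0,oo] (subspace topology) *)
  pm_cont2 : forall s t, ERlt ER0 s -> s <> ERinf ->
    forall e, 0 < e -> exists d, 0 < d /\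
      forall s' t', ERlt ER0 s' -> s' <> ERinf -> ball s d s' -> ball t d t' ->
        ball (op s t) e (op s' t');
  (* for every t, s |-> s (.) t continuous on (0,oo] *)
  pm_cont1 : forall t s, ERlt ER0 s ->
    forall e, 0 < e -> exists d, 0 < d /\
      forall s', ERlt ER0 s' -> ball s d s' -> ball (op s t) e (op s' t);
  pm_mono : forall s s' t t', ERle s s' -> ERle t t' -> ERle (op s t) (op s' t');
  pm_left_id : forall t, op one t = t;
  pm_no_zero_div : forall s t, op s t = ER0 -> s = ER0 \/ t = ER0;
  pm_zero_l : forall t, op ER0 t = ER0;
  pm_zero_r : forall t, op t ER0 = ER0
}.

Definition odot_finite (op : ER -> ER -> ER) (t : ER) : Prop :=
  is_inf (fun u => exists s, ERlt ER0 s /\ u = op s t) ER0.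

Definition non_degenerate (op : ER -> ER -> ER) (one : ER) : Prop :=
  odot_finite op one.

Definition set_sub {E : Type} (A C : E -> Prop) : Prop := forall x, A x -> C x.

Record sigma_algebra {E : Type} (B : (E -> Prop) -> Prop) : Prop := {
  sa_empty : B (fun _ => False);
  sa_compl : forall A, B A -> B (fun x => ~ A x);
  sa_union : forall A : nat -> E -> Prop, (forall n, B (A n)) -> B (fun x => exists n, A n x)
}.

Definition sigma_maxitive {E : Type} (B : (E -> Prop) -> Prop) (nu : (E -> Prop) -> ER) : Prop :=
  nu (fun _ => False) = ER0 /\
  forall A : nat -> E -> Prop, (forall n, B (A n)) ->
    is_sup (fun u => exists n, u = nu (A n)) (nu (fun x => exists n, A n x)).

Definition negligible {E : Type} (B : (E -> Prop) -> Prop) (tau : (E -> Prop) -> ER)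
  (S : E -> Prop) : Prop :=
  exists N, B N /\ tau N = ER0 /\ set_sub S N.

Definition sigma_ideal {E : Type} (B : (E -> Prop) -> Prop) (I : (E -> Prop) -> Prop) : Prop :=
  (exists S, I S) /\
  (forall S, I S -> B S) /\
  (forall A : nat -> E -> Prop, (forall n, I (A n)) -> I (fun x => exists n, A n x)) /\
  (forall S T, I S -> B T -> set_sub T S -> I T).

Definition localizable {E : Type} (B : (E -> Prop) -> Prop) (tau : (E -> Prop) -> ER) : Prop :=
  forall I, sigma_ideal B I ->
    exists L, B L /\
      (forall S, I S -> negligible B tau (fun x => S x /\ ~ L x)) /\
      (forall C, B C -> (forall S, I S -> negligible B tau (fun x => S x /\ ~ C x)) ->
         negligible B tau (fun x => L x /\ ~ C x)).

Definition measurable_fun {E : Type} (B : (E -> Prop) -> Prop) (f : E -> ER) : Prop :=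
  forall t, t <> ERinf -> B (fun x => ERlt t (f x)).

Definition idem_integral_is {E : Type} (op : ER -> ER -> ER) (tau : (E -> Prop) -> ER)
  (f : E -> ER) (A : E -> Prop) (v : ER) : Prop :=
  is_sup (fun u => exists t, t <> ERinf /\ u = op t (tau (fun x => A x /\ ERlt t (f x)))) v.

Definition abs_cont {E : Type} (B : (E -> Prop) -> Prop) (op : ER -> ER -> ER)
  (nu tau : (E -> Prop) -> ER) : Prop :=
  forall A, B A -> odot_finite op (tau A) -> ERle (nu A) (op ERinf (tau A)).

Definition radon_nikodym_property {E : Type} (B : (E -> Prop) -> Prop) (op : ER -> ER -> ER)
  (tau : (E -> Prop) -> ER) : Prop :=
  forall nu, sigma_maxitive B nu -> abs_cont B op nu tau ->
    exists c, measurable_fun B c /\ forall A, B A -> idem_integral_is op tau c A (nu A).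

(* Main.v *)
Require Import Defs.
From Stdlib Require Import Reals.
From Stdlib Require Import Lra Classical ClassicalEpsilon FunctionalExtensionality PropExtensionality ProofIrrelevance.
Open Scope R_scope.

Lemma ER_eq (x y : ER) : erval x = erval y -> x = y.
Proof.
  destruct x as [x hx], y as [y hy]; simpl; intros ->; f_equal; apply proof_irrelevance.
Qed.

Lemma ERle_refl x : ERle x x.
Proof. unfold ERle; destruct (erval x); auto; lra. Qed.

Lemma ERle_trans x y z : ERle x y -> ERle y z -> ERle x z.
Proof. unfold ERle; destruct (erval x), (erval y), (erval z); auto; try lra; tauto. Qed.

Lemma ERle_antisym x y : ERle x y -> ERle y x -> x = y.
Proof.
  unfold ERle; intros H1 H2; apply ER_eq.
  destruct (erval x), (erval y); try tauto; f_equal; lra.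
Qed.

Lemma ERle_0 x : ERle ER0 x.
Proof. destruct x as [[r|] h]; unfold ERle; simpl; auto. Qed.

Lemma ERle_inf x : ERle x ERinf.
Proof. unfold ERle; destruct (erval x); simpl; auto. Qed.

Lemma ERle_0_eq x : ERle x ER0 -> x = ER0.
Proof.
  destruct x as [[r|] h]; unfold ERle; simpl; intros H; try tauto.
  apply ER_eq; simpl; f_equal; simpl in h; lra.
Qed.

Lemma ER0_ne_inf : ER0 <> ERinf.
Proof. intro H; apply (f_equal erval) in H; simpl in H; discriminate. Qed.

Lemma ERlt_some a (h : 0 <= a) y : ERlt (exist nonneg_opt (Some a) h) y <->
  match erval y with None => True | Some b => a < b end.
Proof.
  destruct y as [[b|] hb]; unfold ERlt, ERle; simpl.
  - split.
    + intros [H1 H2]. destruct H1 as [H|H]; auto.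
      exfalso; apply H2; apply ER_eq; simpl; congruence.
    + intros H; split; [lra|]. intro Heq; apply (f_equal erval) in Heq; simpl in Heq;
      injection Heq; lra.
  - split; auto. intros _; split; auto. intro Heq; apply (f_equal erval) in Heq; discriminate.
Qed.

Lemma ERle_lt_trans a b c : ERle a b -> ERlt b c -> ERlt a c.
Proof.
  intros H1 [H2 H3]; split; [eapply ERle_trans; eauto|].
  intro Heq; subst; apply H3; apply ERle_antisym; auto.
Qed.

Lemma sup_exists (S : ER -> Prop) : exists s, is_sup S s.
Proof.
  destruct (classic (exists u, S u /\ erval u = None)) as [[u [Su Hu]]|Hno].
  - exists ERinf; split; [intros; apply ERle_inf|].
    intros b Hb; specialize (Hb u Su); unfold ERle in *; rewrite Hu in Hb.
    destruct (erval b); simpl; tauto.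
  - set (P := fun r => exists u, S u /\ erval u = Some r).
    assert (HS : forall u, S u -> exists r, erval u = Some r /\ P r).
    { intros u Su; destruct (erval u) eqn:E'.
      - exists r; split; auto; exists u; auto.
      - exfalso; apply Hno; eauto. }
    destruct (classic (exists r, P r)) as [Hne|Hemp].
    + destruct (classic (bound P)) as [Hb|Hub].
      * destruct (completeness P Hb Hne) as [m [Hm1 Hm2]].
        assert (hm : 0 <= m).
        { destruct Hne as [r [u [Su Hu]]].
          assert (0 <= r) by (destruct u as [x hx]; simpl in Hu; subst; exact hx).
          specialize (Hm1 r (ex_intro _ u (conj Su Hu))); lra. }
        exists (exist nonneg_opt (Some m) hm); split.
        -- intros u Su; destruct (HS u Su) as [r [Hr Pr]].
           unfold ERle; rewrite Hr; simpl; apply Hm1; auto.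
        -- intros b Hb'. unfold ERle; simpl. destruct (erval b) eqn:Eb; auto.
           apply Hm2; intros x [u [Su Hu]]. specialize (Hb' u Su).
           unfold ERle in Hb'; rewrite Hu, Eb in Hb'; auto.
      * exists ERinf; split; [intros; apply ERle_inf|].
        intros b Hb'. unfold ERle; simpl. destruct (erval b) eqn:Eb; auto.
        apply Hub; exists r; intros x [u [Su Hu]]. specialize (Hb' u Su).
        unfold ERle in Hb'; rewrite Hu, Eb in Hb'; auto.
    + exists ER0; split; [|intros; apply ERle_0].
      intros u Su; exfalso; destruct (HS u Su) as [r [_ Pr]]; eauto.
Qed.

Lemma pred_ext {E : Type} (P Q : E -> Prop) : (forall x, P x <-> Q x) -> P = Q.
Proof.
  intros H; apply functional_extensionality; intros x; apply propositional_extensionality; auto.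
Qed.

Definition nuI {E : Type} (tau : (E -> Prop) -> ER) (I : (E -> Prop) -> Prop) (A : E -> Prop) : ER :=
  proj1_sig (constructive_indefinite_description _
    (sup_exists (fun u => exists S, I S /\ u = tau (fun x => A x /\ S x)))).

Lemma nuI_spec {E : Type} (tau : (E -> Prop) -> ER) I A :
  is_sup (fun u => exists S, I S /\ u = tau (fun x => A x /\ S x)) (@nuI E tau I A).
Proof. unfold nuI; destruct constructive_indefinite_description; auto. Qed.

Lemma meas_inter {E : Type} (B : (E -> Prop) -> Prop) (hB : sigma_algebra B) A C :
  B A -> B C -> B (fun x => A x /\ C x).
Proof.
  intros HA HC.
  set (F := fun (n : nat) x => match n with 0%nat => ~ A x | _ => ~ C x end).
  assert (HF : forall n, B (F n)) by (intros [|n]; apply sa_compl; auto).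
  assert (Heq : (fun x => A x /\ C x) = (fun x => ~ exists n, F n x)).
  { apply pred_ext; intros x; split.
    - intros [H1 H2] [[|n] Hn]; simpl in Hn; tauto.
    - intros H; split; apply NNPP; intro H'; apply H;
        [exists 0%nat | exists 1%nat]; simpl; auto. }
  rewrite Heq; apply sa_compl; auto; apply sa_union; auto.
Qed.

Lemma tau_mono {E : Type} (B : (E -> Prop) -> Prop) tau :
  sigma_maxitive B tau -> forall A C, B A -> B C -> (forall x, A x -> C x) -> ERle (tau A) (tau C).
Proof.
  intros [_ Hs] A C HA HC Hsub.
  set (F := fun (n : nat) => match n with 0%nat => A | _ => C end).
  assert (HF : forall n, B (F n)) by (intros [|n]; simpl; auto).
  specialize (Hs F HF).
  assert (Heq : (fun x => exists n, F n x) = C).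
  { apply pred_ext; intros x; split.
    - intros [[|n] Hn]; simpl in Hn; auto.
    - intros H; exists 1%nat; simpl; auto. }
  rewrite Heq in Hs. destruct Hs as [Hs _]. apply (Hs (tau A)); exists 0%nat; reflexivity.
Qed.

Lemma tn_pos n : 0 <= / (INR n + 1).
Proof. apply Rlt_le, Rinv_0_lt_compat; pose proof (pos_INR n); lra. Qed.

Definition tn (n : nat) : ER := exist nonneg_opt (Some (/ (INR n + 1))) (tn_pos n).

Lemma tn_ne0 n : tn n <> ER0.
Proof.
  intro H; apply (f_equal erval) in H; simpl in H; injection H; intro H'.
  assert (0 < / (INR n + 1)) by (apply Rinv_0_lt_compat; pose proof (pos_INR n); lra).
  lra.
Qed.

Lemma tn_ne_inf n : tn n <> ERinf.
Proof. intro H; apply (f_equal erval) in H; simpl in H; discriminate. Qed.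

Lemma pos_exists_n y : ERlt ER0 y -> exists n, ERlt (tn n) y.
Proof.
  unfold ER0; rewrite ERlt_some; intros H. unfold tn; setoid_rewrite ERlt_some.
  destruct (erval y) as [r|]; [|exists 0%nat; auto].
  destruct (archimed_cor1 r H) as [N [HN1 HN2]]. exists N.
  apply lt_INR in HN2; simpl in HN2.
  assert (/ (INR N + 1) < / INR N) by (apply Rinv_0_lt_contravar; lra). lra.
Qed.

Theorem mainTheorem6 (E : Type) (hE : inhabited E) (B : (E -> Prop) -> Prop)
  (hB : sigma_algebra B) (op : ER -> ER -> ER) (one : ER)
  (hop : pseudo_mult op one) (hnd : non_degenerate op one)
  (tau : (E -> Prop) -> ER) (htau : sigma_maxitive B tau)
  (hRN : radon_nikodym_property B op tau) :
  localizable B tau.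
Proof.
  intros I HI.
  destruct HI as [_ [HIB [_ _]]].
  pose proof (tau_mono B tau htau) as Hmono.
  destruct htau as [htau0 htauS].
  set (nu := nuI tau I).
  assert (Hnu : sigma_maxitive B nu).
  { split.
    - apply ERle_0_eq. destruct (nuI_spec tau I (fun _ => False)) as [_ Hl].
      apply Hl. intros u [S [_ ->]].
      replace (fun x : E => False /\ S x) with (fun _ : E => False)
        by (apply pred_ext; tauto).
      rewrite htau0; apply ERle_refl.
    - intros A HA. assert (HU : B (fun x => exists n, A n x)) by (apply sa_union; auto).
      split.
      + intros u [n ->]. destruct (nuI_spec tau I (A n)) as [_ Hl]. apply Hl.
        intros v [S [HS ->]]. eapply ERle_trans.
        * apply (Hmono _ (fun x => (exists n, A n x) /\ S x));
            try apply meas_inter; auto.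
          intros x [H1 H2]; split; eauto.
        * destruct (nuI_spec tau I (fun x => exists n, A n x)) as [Hu _].
          apply Hu; eauto.
      + intros b Hb. destruct (nuI_spec tau I (fun x => exists n, A n x)) as [_ Hl].
        apply Hl. intros v [S [HS ->]].
        replace (fun x => (exists n, A n x) /\ S x) with
          (fun x => exists n, (fun n x => A n x /\ S x) n x)
          by (apply pred_ext; intros x; split; [intros [n [H1 H2]]; split; eauto
                                                | intros [[n H1] H2]; eauto]).
        destruct (htauS (fun n x => A n x /\ S x)) as [_ Hl2];
          [intros n; apply meas_inter; auto|].
        apply Hl2. intros w [n ->]. eapply ERle_trans; [|apply (Hb (nu (A n))); eauto].
        destruct (nuI_spec tau I (A n)) as [Hu _]. apply Hu; eauto. }
  assert (Hac : abs_cont B op nu tau).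
  { intros A HA _. destruct (nuI_spec tau I A) as [_ Hl]. apply Hl.
    intros v [S [HS ->]]. eapply ERle_trans.
    - apply (Hmono _ A); try apply meas_inter; auto. tauto.
    - rewrite <- (pm_left_id _ _ hop (tau A)) at 1.
      apply (pm_mono _ _ hop); [apply ERle_inf | apply ERle_refl]. }
  destruct (hRN nu Hnu Hac) as [c [Hc Hint]].
  assert (HL : B (fun x => ERlt ER0 (c x))) by (apply Hc; exact ER0_ne_inf).
  exists (fun x => ERlt ER0 (c x)).
  split; [exact HL|]. split.
  - intros S HS. set (N := fun x => S x /\ ~ ERlt ER0 (c x)).
    assert (HN : B N) by (apply meas_inter; auto; apply sa_compl; auto).
    exists N. split; [exact HN|]. split; [|intros x Hx; exact Hx].
    apply ERle_0_eq. eapply ERle_trans.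
    + destruct (nuI_spec tau I N) as [Hu _].
      assert (Heq : (fun x => N x /\ S x) = N) by (apply pred_ext; unfold N; tauto).
      rewrite <- Heq at 1. apply Hu. eauto.
    + destruct (Hint N HN) as [_ Hl]. apply Hl.
      intros u [t [Ht ->]].
      replace (fun x => N x /\ ERlt t (c x)) with (fun _ : E => False).
      * rewrite htau0, (pm_zero_r _ _ hop); apply ERle_refl.
      * apply pred_ext; intros x; split; [tauto|]. intros [[_ Hx] Hx']. apply Hx.
        eapply ERle_lt_trans; [apply ERle_0|exact Hx'].
  - intros C HC HSC. set (N := fun x => ERlt ER0 (c x) /\ ~ C x).
    assert (HN : B N) by (apply meas_inter; auto; apply sa_compl; auto).
    exists N. split; [exact HN|]. split; [|intros x Hx; exact Hx].
    assert (HnuN : ERle (nu N) ER0).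
    { destruct (nuI_spec tau I N) as [_ Hl]. apply Hl.
      intros v [S [HS ->]]. destruct (HSC S HS) as [M [HM [HtM Hsub]]].
      rewrite <- HtM. apply Hmono; auto; [apply meas_inter; auto|].
      intros x [[_ H1] H2]; apply Hsub; auto. }
    assert (Hn : forall n, tau (fun x => N x /\ ERlt (tn n) (c x)) = ER0).
    { intros n. destruct (Hint N HN) as [Hu _].
      assert (H0 : op (tn n) (tau (fun x => N x /\ ERlt (tn n) (c x))) = ER0).
      { apply ERle_0_eq. eapply ERle_trans; [apply Hu|exact HnuN].
        exists (tn n); split; auto; apply tn_ne_inf. }
      destruct (pm_no_zero_div _ _ hop _ _ H0) as [H|H]; auto.
      exfalso; apply (tn_ne0 n H). }
    replace N with (fun x => exists n, (fun n x => N x /\ ERlt (tn n) (c x)) n x).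
    + apply ERle_0_eq. destruct (htauS (fun n x => N x /\ ERlt (tn n) (c x))) as [_ Hl].
      * intros n; apply meas_inter; auto. apply Hc, tn_ne_inf.
      * apply Hl. intros u [n ->]. rewrite Hn; apply ERle_refl.
    + apply pred_ext; intros x; split.
      * intros [n [H1 _]]; exact H1.
      * intros Hx. destruct (pos_exists_n (c x) (proj1 Hx)) as [n Hn']. eauto.
Qed.
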